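(* For every join query $\mathcal R$, the MO bound $\sum_{c\in\mathcal C_2}\mathrm{IN}^{\mathsf{MO}(\mathcal R(c))}$ is $O(\mathsf{AGM}(\mathcal R))$, where the hidden factor depends only on the query schema (number of relations and attributes) and is at most polylogarithmic in $\mathrm{IN}$, but does not otherwise depend on the tuples.
   Context: A join query consists of a finite set $\mathcal R$ of relations; each $R$ is a finite set of tuples over attribute set $\mathsf{attr}(R)$; $\mathcal A=\bigcup_R\mathsf{attr}(R)$. $\mathrm{IN}=\sum_{R\in\mathcal R}|R|\ge 2$ (always the input size of the original query), and $\log$ denotes $\log_{\mathrm{IN}}$. For a relation $S$, $A\subseteq\mathsf{attr}(S)$ and $v\in\pi_A(S)$: $\mathsf{deg}(v,S,A)=|\{t\in S:\pi_A(t)=v\}|$; $d_{S,A}=\max_{v\in\pi_A(S)}\mathsf{deg}(v,S,A)$ for $A\neq\emptyset$, $d_{S,\emptyset}=|S|$; for $A\subseteq B\subseteq\mathsf{attr}(S)$, $d(A,B,S)=\log d_{\pi_B(S),A}$. Degree configurations: for $L>1$, buckets $B_l=[L^l,L^{l+1})$, $l\in\mathbb N$, ordered by index. A degree configuration $c$ maps each $(R,A)$ with $R\in\mathcal R$, $A\subseteq\mathsf{attr}(R)$ to a bucket $c(R,A)$ with $A'\subseteq A\Rightarrow c(R,A)\le c(R,A')$, $c(R,\mathsf{attr}(R))=B_0$, $c(R,\emptyset)=B_{\lfloor\log_L|R|\rfloor}$; $\mathcal C_L$ is the set of these. $R(c)=\{t\in R:\forall A\subseteq\mathsf{attr}(R),\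 \mathsf{deg}(\pi_A(t),R,A)\in c(R,A)\}$ and $\mathcal R(c)=\{R(c):R\in\mathcal R\}$. For a set $\mathcal S$ of (nonempty) relations with attribute set $\mathcal A$, the MO program has variables $s_F$ ($F\subseteq\mathcal A$) and constraints $s_\emptyset=0$; $s_F\le s_{F'}$ for $F\subseteq F'$; $s_{B\cup E}\le s_{A\cup E}+d(A,B,S)$ for all $S\in\mathcal S$, $E\subseteq\mathcal A$, $A\subseteq B\subseteq\mathsf{attr}(S)$; $\mathsf{MO}(\mathcal S)$ is the maximum of $s_{\mathcal A}$ (degrees computed in the relations of $\mathcal S$). (Configurations $c$ with some $R(c)=\emptyset$ contribute nothing to the join and may be omitted from the sum.) AGM bound: $\mathsf{AGM}(\mathcal S)=\mathrm{IN}^{\rho^*}$ where $\rho^*=\min\sum_{S\in\mathcal S}w_S\log|S|$ over $w_S\ge0$ with $\sum_{S:a\in\mathsf{attr}(S)}w_S\ge1$ for every attribute $a$. *)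

(* Defs.v *)
From Stdlib Require Import Reals ClassicalEpsilon.
From HB Require Import structures.
From mathcomp Require Import all_boot.
Set Implicit Arguments. Unset Strict Implicit. Unset Printing Implicit Defensive.
Local Open Scope R_scope.

(* Attributes are 'I_n.  A tuple is a finite map from attributes to values;
   a tuple over attribute set X has value [Some _] exactly on X. *)
Definition tup (V : finType) (n : nat) := {ffun 'I_n -> option V}.

Definition proj (V : finType) (n : nat) (A : {set 'I_n}) (t : tup V n) : tup V n :=
  [ffun a => if a \in A then t a else None].

Definition proj_rel (V : finType) (n : nat) (A : {set 'I_n}) (S : {set tup V n})
  : {set tup V n} := [set proj A t | t in S].

Definition deg (V : finType) (n : nat) (v : tup V n) (S : {set tup V n})
  (A : {set 'I_n}) : nat := #|[set t in S | proj A t == v]|.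

Definition dmax (V : finType) (n : nat) (S : {set tup V n}) (A : {set 'I_n}) : nat :=
  if A == set0 then #|S| else \max_(v in proj_rel A S) deg v S A.

Definition logIN (IN x : nat) : R := Rdiv (ln (INR x)) (ln (INR IN)).

Definition dlog (IN : nat) (V : finType) (n : nat) (A B : {set 'I_n})
  (S : {set tup V n}) : R := logIN IN (dmax (proj_rel B S) A).

Definition wf_query (V : finType) (k n : nat) (attr : 'I_k -> {set 'I_n})
  (rel : 'I_k -> {set tup V n}) : Prop :=
  (forall i t, t \in rel i -> forall a, (t a != None) = (a \in attr i)) /\
  (forall a : 'I_n, exists i, a \in attr i).

Definition IN (V : finType) (k n : nat) (rel : 'I_k -> {set tup V n}) : nat :=
  \sum_(i < k) #|rel i|.

Definition is_glb (E : R -> Prop) (m : R) : Prop :=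
  (forall x, E x -> (m <= x)) /\ (forall b, (forall x, E x -> (b <= x)) -> (b <= m)).

Definition MO_feasible (INv : nat) (V : finType) (k n : nat) (attr : 'I_k -> {set 'I_n})
  (S : 'I_k -> {set tup V n}) (s : {set 'I_n} -> R) : Prop :=
  s set0 = 0 /\
  (forall F F' : {set 'I_n}, F \subset F' -> (s F <= s F')) /\
  (forall (i : 'I_k) (E A B : {set 'I_n}), A \subset B -> B \subset attr i ->
     (s (B :|: E) <= s (A :|: E) + dlog INv A B (S i))).

Definition MO (INv : nat) (V : finType) (k n : nat) (attr : 'I_k -> {set 'I_n})
  (S : 'I_k -> {set tup V n}) : R :=
  epsilon (inhabits 0)
    (fun m => is_lub (fun x => exists s, MO_feasible INv attr S s /\ x = s setT) m).

Definition rho_star (V : finType) (k n : nat) (attr : 'I_k -> {set 'I_n})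
  (rel : 'I_k -> {set tup V n}) : R :=
  epsilon (inhabits 0)
    (fun m => is_glb (fun x => exists w : 'I_k -> R,
        (forall i, (0 <= w i)) /\
        (forall a : 'I_n, (1 <= \big[Rplus/0]_(i | a \in attr i) w i)) /\
        x = \big[Rplus/0]_(i < k) (w i * logIN (IN rel) #|rel i|)) m).

Definition AGM (V : finType) (k n : nat) (attr : 'I_k -> {set 'I_n})
  (rel : 'I_k -> {set tup V n}) : R :=
  Rpower (INR (IN rel)) (rho_star attr rel).

(* Degree configurations for L = 2: c (i, A) = l means bucket [2^l, 2^(l+1)).
   Bucket indices never exceed floor(log2 IN) <= IN, so 'I_(IN+1) suffices;
   entries for A not a subset of attr i are fixed to 0 (unused). *)
Definition config (V : finType) (k n : nat) (rel : 'I_k -> {set tup V n}) :=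
  {ffun 'I_k * {set 'I_n} -> 'I_(IN rel).+1}.

Definition is_config (V : finType) (k n : nat) (attr : 'I_k -> {set 'I_n})
  (rel : 'I_k -> {set tup V n}) (c : config rel) : bool :=
  [forall i : 'I_k,
    [&& nat_of_ord (c (i, attr i)) == 0%N,
        nat_of_ord (c (i, set0)) == trunc_log 2 #|rel i|,
        [forall A : {set 'I_n}, (A \subset attr i) || (nat_of_ord (c (i, A)) == 0%N)] &
        [forall A : {set 'I_n}, forall A' : {set 'I_n},
           ((A' \subset A) && (A \subset attr i)) ==> (c (i, A) <= c (i, A'))%N]]].

Definition restrict (V : finType) (k n : nat) (attr : 'I_k -> {set 'I_n})
  (rel : 'I_k -> {set tup V n}) (c : config rel) (i : 'I_k) : {set tup V n} :=
  [set t in rel i | [forall A : {set 'I_n}, (A \subset attr i) ==>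
      ((2 ^ c (i, A) <= deg (proj A t) (rel i) A) && (deg (proj A t) (rel i) A < 2 ^ (c (i, A)).+1))%N]].

Definition MO_bound (V : finType) (k n : nat) (attr : 'I_k -> {set 'I_n})
  (rel : 'I_k -> {set tup V n}) : R :=
  \big[Rplus/0]_(c : config rel | is_config attr c && [forall i, restrict attr c i != set0])
     Rpower (INR (IN rel)) (MO (IN rel) attr (restrict attr c)).

(* Main.v *)
Require Import Defs.
From Stdlib Require Import Reals Lra Lia ClassicalEpsilon Classical.
From HB Require Import structures.
From mathcomp Require Import all_boot.
Set Implicit Arguments. Unset Strict Implicit. Unset Printing Implicit Defensive.
Local Open Scope R_scope.
Lemma RplusA : associative Rplus. Proof. move=>*; by rewrite Rplus_assoc. Qed.
HB.instance Definition _ := Monoid.isComLaw.Build R 0 Rplus RplusA Rplus_comm Rplus_0_l.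
HB.instance Definition _ := Monoid.isMulLaw.Build R 0 Rmult Rmult_0_l Rmult_0_r.
HB.instance Definition _ := Monoid.isAddLaw.Build R Rmult Rplus Rmult_plus_distr_r Rmult_plus_distr_l.

Lemma sumR_le (I : Type) (r : seq I) (P : pred I) (F G : I -> R) :
  (forall i, P i -> F i <= G i) ->
  \big[Rplus/0]_(i <- r | P i) F i <= \big[Rplus/0]_(i <- r | P i) G i.
Proof. move=> H; apply: (big_ind2 (fun x y => x <= y)); [lra| |by []]; move=> *; lra. Qed.

Lemma sumR_ge0 (I : Type) (r : seq I) (P : pred I) (F : I -> R) :
  (forall i, P i -> 0 <= F i) -> 0 <= \big[Rplus/0]_(i <- r | P i) F i.
Proof. move=> H; apply: (big_ind (fun x => 0 <= x)); [lra| |by []]; move=> *; lra. Qed.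

Lemma sumR_distr (I : Type) (r : seq I) (P : pred I) (F : I -> R) a :
  \big[Rplus/0]_(i <- r | P i) (a * F i) = a * \big[Rplus/0]_(i <- r | P i) F i.
Proof. by rewrite big_distrr. Qed.

Lemma sumR_const (I : finType) (P : pred I) a :
  \big[Rplus/0]_(i | P i) a = INR #|P| * a.
Proof. rewrite big_const; elim: #|P| => [|m IH]; first by rewrite /=; lra.
rewrite iterS IH S_INR; lra. Qed.

Lemma proj_proj (V : finType) n (A B : {set 'I_n}) (t : tup V n) :
  A \subset B -> proj A (proj B t) = proj A t.
Proof.
move=> AB; apply/ffunP=> a.
rewrite /proj !ffunE; case: ifP => // aA; by rewrite (subsetP AB a aA).
Qed.

Lemma core (V : finType) k n (attr : 'I_k -> {set 'I_n}) (rel : 'I_k -> {set tup V n})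
  (c : config rel) i (A B : {set 'I_n}) (v : tup V n) :
  is_config attr c -> A \subset B -> B \subset attr i ->
  (#|[set u in proj_rel B (restrict attr c i) | proj A u == v]| * 2 ^ c (i,B)
     <= 2 ^ (c (i,A)).+1)%N.
Proof.
move=> cfg AB Bat.
set X := [set u in _ | _].
have Arel : A \subset attr i by apply: subset_trans AB Bat.
have inR : forall t, t \in restrict attr c i -> forall C : {set 'I_n}, C \subset attr i ->
   (2 ^ c (i, C) <= deg (proj C t) (rel i) C < 2 ^ (c (i, C)).+1)%N.
  move=> t; rewrite inE => /andP [_ /forallP H] C CS.
  by have := H C; rewrite CS.
case: (set_0Vmem X) => [-> | [u0 u0X]]; first by rewrite cards0.
have := u0X; rewrite inE => /andP [/imsetP [t0 t0S ->] /eqP t0v].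
rewrite proj_proj // in t0v.
have /andP [_ degA] := inR t0 t0S A Arel.
rewrite t0v in degA.
set D := [set t in rel i | proj A t == v].
have degD : (#|D| < 2 ^ (c (i, A)).+1)%N by [].
apply: leq_trans (ltnW degD).
set Z := [set t in D | proj B t \in X].
apply: (leq_trans _ (subset_leq_card (_ : Z \subset D))); last first.
  by apply/subsetP=> t; rewrite inE => /andP [].
rewrite -[#|Z|]sum1_card (partition_big (fun t => proj B t) (fun u => u \in X)); last first.
  by move=> t; rewrite inE => /andP [].
rewrite -sum_nat_const; apply: leq_sum => u uX.
have := uX; rewrite inE => /andP [/imsetP [t1 t1S uE] _]; subst u.
have /andP [degB _] := inR t1 t1S B Bat.
apply: (leq_trans degB).
rewrite sum1_card; apply: subset_leq_card; apply/subsetP => t.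
rewrite !inE => /andP [trel /eqP tB].
change ((t \in Z) && (proj B t == proj B t1)); rewrite !inE trel tB eqxx /= andbT.
have := uX; rewrite inE => /andP [uin /eqP uv].
by rewrite uin -uv -tB !proj_proj // eqxx.
Qed.

Lemma ln0 : ln 0 = 0.
Proof. rewrite /ln; case: (Rlt_dec 0 0) => h; [exfalso; lra | reflexivity]. Qed.

Lemma lnINR_ge0 m : 0 <= ln (INR m).
Proof.
case: m => [|m]; first by rewrite ln0; lra.
rewrite -ln_1; case: m => [|m]; first by simpl; lra.
left; apply: ln_increasing; first lra.
have := pos_INR m; rewrite !S_INR; lra.
Qed.

Lemma lnINR_le m M : (m <= M)%N -> ln (INR m) <= ln (INR M).
Proof.
case: m => [|m] h; first by rewrite ln0; apply: lnINR_ge0.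
have h1 : INR m.+1 <= INR M by apply: le_INR; apply/leP.
have h0 : 0 < INR m.+1 by rewrite S_INR; have := pos_INR m; lra.
case: h1 => h1; last by rewrite h1; lra.
by left; apply: ln_increasing.
Qed.

Lemma cfg_prop (V : finType) k n (attr : 'I_k -> {set 'I_n}) (rel : 'I_k -> {set tup V n})
  (c : config rel) i :
  is_config attr c ->
  [/\ nat_of_ord (c (i, attr i)) = 0%N,
      nat_of_ord (c (i, set0)) = trunc_log 2 #|rel i| &
      forall A B : {set 'I_n}, A \subset B -> B \subset attr i -> (c (i, B) <= c (i, A))%N].
Proof.
move/forallP/(_ i)/and4P => [/eqP c1 /eqP c0 _ /forallP hm]; split=> // A B AB Bat.
by have /forallP/(_ A)/implyP := hm B; apply; rewrite AB Bat.
Qed.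

Lemma INR_expn a m : INR (a ^ m)%N = INR a ^ m.
Proof.
elim: m => [|m IH]; first by rewrite expn0.
by rewrite expnS -multE mult_INR IH.
Qed.

Definition LL (IN : nat) : R := ln 2 / ln (INR IN).

Lemma dlog_bound (V : finType) k n (attr : 'I_k -> {set 'I_n}) (rel : 'I_k -> {set tup V n})
  (c : config rel) i (A B : {set 'I_n}) :
  is_config attr c -> A \subset B -> B \subset attr i -> (2 <= IN rel)%N ->
  dlog (IN rel) A B (restrict attr c i) <=
    (INR (c (i, A)) - INR (c (i, B)) + 1) * LL (IN rel).
Proof.
move=> cfg AB Bat IN2.
have [_ _ mono] := cfg_prop i cfg.
have cBA := mono A B AB Bat.
set S := restrict attr c i.
set m := ((c (i, A)).+1 - c (i, B))%N.
have key : forall v, (#|[set u in proj_rel B S | proj A u == v]| <= 2 ^ m)%N.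
  move=> v; have := core v cfg AB Bat.
  have -> : (2 ^ (c (i, A)).+1 = 2 ^ m * 2 ^ c (i, B))%N.
    by rewrite -expnD subnK //; apply: leq_trans cBA _.
  by rewrite leq_pmul2r // expn_gt0.
have dm : (dmax (proj_rel B S) A <= 2 ^ m)%N.
  rewrite /dmax; case: eqP => [A0 | _].
    have := key [ffun => None]; congr (_ <= _)%N; apply: eq_card => u.
    rewrite !inE; case: (u \in _) => //=; apply/eqP/ffunP => a.
    by rewrite /proj !ffunE A0 inE.
  by apply/bigmax_leqP => v _; apply: key.
have lnIN : 0 < ln (INR (IN rel)).
  rewrite -ln_1; apply: ln_increasing; first lra.
  have : (2 <= INR (IN rel)) by apply: (le_INR 2); apply/leP.
  lra.
rewrite /dlog /logIN /LL.
have -> : INR (c (i, A)) - INR (c (i, B)) + 1 = INR m.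
  rewrite /m subSn // S_INR minus_INR; first lra. by apply/leP.
apply: Rle_trans (_ : ln (INR (2 ^ m)) / ln (INR (IN rel)) <= _).
  apply: Rmult_le_compat_r; first by left; apply: Rinv_0_lt_compat.
  by apply: lnINR_le.
rewrite INR_expn ln_pow /=; last lra.
have -> : (1 + 1 = 2) by lra. rewrite /Rdiv Rmult_assoc; lra.
Qed.

Lemma sum_min1 k (P : pred 'I_k) (w : 'I_k -> R) :
  (forall i, 0 <= w i) -> 1 <= \big[Rplus/0]_(i | P i) w i ->
  1 <= \big[Rplus/0]_(i | P i) Rmin (w i) 1.
Proof.
move=> w0 h.
case: (classic (exists i, P i /\ 1 <= w i)) => [[i [Pi wi]] | nex].
  rewrite (bigD1 i) //= Rmin_right //.
  set S := \big[Rplus/0]_(_ < k | _) _.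
  have : 0 <= S.
    apply: sumR_ge0 => j _; apply: Rmin_glb; [apply: w0 | lra].
  lra.
rewrite (eq_bigr w) // => i Pi; apply: Rmin_left.
case: (Rle_lt_dec (w i) 1) => // hw; exfalso; apply: nex; exists i; split=> //; lra.
Qed.

Definition Pre n (j : nat) : {set 'I_n} := [set a : 'I_n | (a < j)%N].

Definition Gt (V : finType) k n (attr : 'I_k -> {set 'I_n}) (rel : 'I_k -> {set tup V n})
  (c : config rel) (w : 'I_k -> R) (j : nat) : R :=
  \big[Rplus/0]_(i < k) (Rmin (w i) 1 *
      ((INR (c (i, set0)) - INR (c (i, attr i :&: Pre n j)) + INR #|attr i :&: Pre n j|)
        * LL (IN rel))).

Lemma LLpos N : (2 <= N)%N -> 0 < LL N.
Proof.
move=> N2; rewrite /LL /Rdiv; apply: Rmult_lt_0_compat.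
  rewrite -ln_1; apply: ln_increasing; lra.
apply: Rinv_0_lt_compat; rewrite -ln_1; apply: ln_increasing; first lra.
have : (2 <= INR N) by apply: (le_INR 2); apply/leP.
lra.
Qed.

Lemma chain (V : finType) k n (attr : 'I_k -> {set 'I_n}) (rel : 'I_k -> {set tup V n})
  (c : config rel) (s : {set 'I_n} -> R) (w : 'I_k -> R) :
  is_config attr c -> (2 <= IN rel)%N ->
  MO_feasible (IN rel) attr (restrict attr c) s ->
  (forall i, 0 <= w i) -> (forall a : 'I_n, 1 <= \big[Rplus/0]_(i | a \in attr i) w i) ->
  forall j, (j <= n)%N -> s (Pre n j) <= Gt attr c w j.
Proof.
move=> cfg IN2 [s0 [smono sdeg]] w0 cover.
have LL0 := LLpos IN2.
have wm0 : forall i, 0 <= Rmin (w i) 1 by move=> i; apply: Rmin_glb; [apply: w0 | lra].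
elim=> [|j IH] jn.
  have -> : Pre n 0 = set0 by apply/setP => a; rewrite !inE ltn0.
  rewrite s0; apply: sumR_ge0 => i _; rewrite setI0 cards0.
  have -> : (INR (c (i, set0)) - INR (c (i, set0)) + INR 0) * LL (IN rel) = 0 by simpl; ring.
  rewrite Rmult_0_r; lra.
have {IH} IH := IH (ltnW jn).
pose a : 'I_n := Ordinal jn.
have aPj : a \notin Pre n j by rewrite inE ltnn.
have PS : Pre n j.+1 = a |: Pre n j.
  apply/setP => x; rewrite !inE ltnS leq_eqVlt; congr (_ || _).
have sub : Pre n j \subset Pre n j.+1 by rewrite PS subsetUr.
have dpos : 0 <= s (Pre n j.+1) - s (Pre n j) by have := smono _ _ sub; lra.
pose X i := (INR (c (i, attr i :&: Pre n j)) - INR (c (i, attr i :&: Pre n j.+1))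
             + (INR #|attr i :&: Pre n j.+1| - INR #|attr i :&: Pre n j|)) * LL (IN rel).
have -> : Gt attr c w j.+1 = Gt attr c w j + \big[Rplus/0]_(i < k) (Rmin (w i) 1 * X i).
  rewrite /Gt -big_split; apply: eq_bigr => i _; rewrite /X /=; ring.
have X0 : forall i, 0 <= X i.
  move=> i; rewrite /X; apply: Rmult_le_pos; last lra.
  have [_ _ mono] := cfg_prop i cfg.
  have h1 := mono _ _ (setIS (attr i) sub) (subsetIl _ _).
  have h2 := subset_leq_card (setIS (attr i) sub).
  have := le_INR _ _ (leP h1); have := le_INR _ _ (leP h2); lra.
have Xd : forall i, a \in attr i -> s (Pre n j.+1) - s (Pre n j) <= X i.
  move=> i ai.
  set A := attr i :&: Pre n j; set B := attr i :&: Pre n j.+1.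
  have AB : A \subset B by apply: setIS.
  have Bat : B \subset attr i by apply: subsetIl.
  have hB : B = a |: A by rewrite /B /A PS setIUr (setIidPr _) ?sub1set.
  have h := sdeg i (Pre n j) A B AB Bat.
  have e1 : B :|: Pre n j = Pre n j.+1.
    by rewrite hB PS; apply/setP => x; rewrite !inE; case: (x == a); case: (x \in attr i); case: (x < j)%N.
  have e2 : A :|: Pre n j = Pre n j by apply/setUidPr; apply: subsetIr.
  rewrite e1 e2 in h.
  have hd := dlog_bound cfg AB Bat IN2.
  have cB : #|B| = #|A|.+1.
    rewrite hB cardsU1; suff -> : a \notin A by [].
    by rewrite /A inE negb_and aPj orbT.
  rewrite /X -/A -/B cB S_INR; lra.
suff : s (Pre n j.+1) - s (Pre n j) <= \big[Rplus/0]_(i < k) (Rmin (w i) 1 * X i).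
  lra.
rewrite (bigID (fun i => a \in attr i)) /=.
set S2 := \big[Rplus/0]_(i < k | ~~ _) _.
have S20 : 0 <= S2 by apply: sumR_ge0 => i _; apply: Rmult_le_pos.
set S1 := \big[Rplus/0]_(i < k | _) _.
have : \big[Rplus/0]_(i < k | a \in attr i) (Rmin (w i) 1 * (s (Pre n j.+1) - s (Pre n j))) <= S1.
  apply: sumR_le => i ai; apply: Rmult_le_compat_l => //; exact: Xd.
have cov := @sum_min1 k (fun i => a \in attr i) w w0 (cover a).
rewrite (eq_bigr (fun i => (s (Pre n j.+1) - s (Pre n j)) * Rmin (w i) 1)); last by move=> i _; ring.
rewrite sumR_distr.
move: cov; set T := \big[Rplus/0]_(i < k | _) _ => cov.
nra.
Qed.

Lemma s_bound (V : finType) k n (attr : 'I_k -> {set 'I_n}) (rel : 'I_k -> {set tup V n})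
  (c : config rel) (s : {set 'I_n} -> R) (w : 'I_k -> R) :
  is_config attr c -> (2 <= IN rel)%N -> (forall i, restrict attr c i != set0) ->
  MO_feasible (IN rel) attr (restrict attr c) s ->
  (forall i, 0 <= w i) -> (forall a : 'I_n, 1 <= \big[Rplus/0]_(i | a \in attr i) w i) ->
  s setT <= \big[Rplus/0]_(i < k) (w i * logIN (IN rel) #|rel i|) + INR (k * n) * LL (IN rel).
Proof.
move=> cfg IN2 ne feas w0 cover.
have := chain cfg IN2 feas w0 cover (leqnn n).
have PT : Pre n n = setT by apply/setP => a; rewrite !inE ltn_ord.
rewrite PT => h; apply: Rle_trans h _.
rewrite /Gt.
have -> : INR (k * n) * LL (IN rel) = \big[Rplus/0]_(i < k) (INR n * LL (IN rel)).
  by rewrite sumR_const card_ord mult_INR; ring.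
rewrite -big_split; apply: sumR_le => i _ /=.
have LL0 := LLpos IN2.
have [c1 c0 _] := cfg_prop i cfg.
rewrite PT setIT c1 c0 /=.
have wm0 : 0 <= Rmin (w i) 1 by apply: Rmin_glb; [apply: w0 | lra].
have wm1 : Rmin (w i) 1 <= 1 by apply: Rmin_r.
have wmw : Rmin (w i) 1 <= w i by apply: Rmin_l.
have relpos : (0 < #|rel i|)%N.
  have /set0Pn [t] := ne i; rewrite inE => /andP [tr _].
  by apply/card_gt0P; exists t.
have hT : INR (trunc_log 2 #|rel i|) * LL (IN rel) <= logIN (IN rel) #|rel i|.
  rewrite /LL /logIN /Rdiv -Rmult_assoc.
  apply: Rmult_le_compat_r.
    apply: Rlt_le; apply: Rinv_0_lt_compat; rewrite -ln_1; apply: ln_increasing; first lra.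
    have : (2 <= INR (IN rel)) by apply: (le_INR 2); apply/leP.
    lra.
  have h2 := lnINR_le (trunc_logP (isT : (1 < 2)%N) relpos).
  rewrite INR_expn ln_pow /= in h2; last lra.
  try (have -> : (1 + 1 = 2) by lra).
  exact: h2.
have logpos : 0 <= logIN (IN rel) #|rel i|.
  rewrite /logIN /Rdiv; apply: Rmult_le_pos; first exact: lnINR_ge0.
  apply: Rlt_le; apply: Rinv_0_lt_compat; rewrite -ln_1; apply: ln_increasing; first lra.
  have : (2 <= INR (IN rel)) by apply: (le_INR 2); apply/leP.
  lra.
have hn : INR #|attr i| <= INR n.
  apply: le_INR; apply/leP; have := max_card (attr i); by rewrite card_ord.
have hn0 := pos_INR #|attr i|.
have e : (INR (trunc_log 2 #|rel i|) - INR 0 + INR #|attr i|) * LL (IN rel)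
   = INR (trunc_log 2 #|rel i|) * LL (IN rel) + INR #|attr i| * LL (IN rel) by simpl; ring.
rewrite e.
have h1 : Rmin (w i) 1 * (INR (trunc_log 2 #|rel i|) * LL (IN rel)) <= w i * logIN (IN rel) #|rel i|.
  apply: Rle_trans (_ : Rmin (w i) 1 * logIN (IN rel) #|rel i| <= _).
    by apply: Rmult_le_compat_l.
  by apply: Rmult_le_compat_r.
have h3 : Rmin (w i) 1 * (INR #|attr i| * LL (IN rel)) <= INR n * LL (IN rel).
  have : INR #|attr i| * LL (IN rel) <= INR n * LL (IN rel) by apply: Rmult_le_compat_r; lra.
  have : 0 <= INR #|attr i| * LL (IN rel) by apply: Rmult_le_pos; lra.
  nra.
rewrite Rmult_plus_distr_l; apply: Rplus_le_compat; [exact: h1 | exact: h3].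
Qed.

Lemma cover1 k n (attr : 'I_k -> {set 'I_n}) :
  (forall a : 'I_n, exists i, a \in attr i) ->
  forall a : 'I_n, 1 <= \big[Rplus/0]_(i | a \in attr i) (fun _ => 1) i.
Proof.
move=> h a; have [i0 ai0] := h a.
rewrite (bigD1 i0) //=.
set S := \big[Rplus/0]_(_ < k | _) _.
have : 0 <= S by apply: sumR_ge0 => *; lra.
lra.
Qed.

Lemma rho_glb (V : finType) k n (attr : 'I_k -> {set 'I_n}) (rel : 'I_k -> {set tup V n}) :
  wf_query attr rel -> (2 <= IN rel)%N ->
  is_glb (fun x => exists w : 'I_k -> R,
        (forall i, (0 <= w i)) /\
        (forall a : 'I_n, (1 <= \big[Rplus/0]_(i | a \in attr i) w i)) /\
        x = \big[Rplus/0]_(i < k) (w i * logIN (IN rel) #|rel i|)) (rho_star attr rel).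
Proof.
move=> [_ wf] IN2.
set F := fun x => _.
rewrite /rho_star -/F.
apply: epsilon_spec.
set E := fun x => F (- x).
have Ene : exists x, E x.
  exists (- \big[Rplus/0]_(i < k) ((fun _ => 1) i * logIN (IN rel) #|rel i|)).
  rewrite /E /F Ropp_involutive; exists (fun _ => 1); split; first by move=> *; lra.
  split=> //; exact: cover1.
have Eb : bound E.
  exists 0 => x [w [w0 [_ hx]]].
  suff : 0 <= \big[Rplus/0]_(i < k) (w i * logIN (IN rel) #|rel i|) by lra.
  apply: sumR_ge0 => i _; apply: Rmult_le_pos => //.
  rewrite /logIN /Rdiv; apply: Rmult_le_pos; first exact: lnINR_ge0.
  apply: Rlt_le; apply: Rinv_0_lt_compat; rewrite -ln_1; apply: ln_increasing; first lra.
  have : (2 <= INR (IN rel)) by apply: (le_INR 2); apply/leP.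
  lra.
case: (completeness E Eb Ene) => m [mub mlub].
exists (- m); split.
  move=> x Fx; have : E (- x) by rewrite /E Ropp_involutive.
  move/mub; lra.
move=> b hb.
suff : m <= - b by lra.
apply: mlub => x Ex; have := hb _ Ex; lra.
Qed.

Lemma MO_le (V : finType) k n (attr : 'I_k -> {set 'I_n}) (rel : 'I_k -> {set tup V n})
  (c : config rel) :
  wf_query attr rel -> (2 <= IN rel)%N -> is_config attr c ->
  (forall i, restrict attr c i != set0) ->
  MO (IN rel) attr (restrict attr c) <= rho_star attr rel + INR (k * n) * LL (IN rel).
Proof.
move=> wf IN2 cfg ne.
have [rlow _] := rho_glb wf IN2.
have [rb rglb] := rho_glb wf IN2.
set K := INR (k * n) * LL (IN rel).
have sb : forall s, MO_feasible (IN rel) attr (restrict attr c) s ->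
    s setT <= rho_star attr rel + K.
  move=> s feas.
  suff : s setT - K <= rho_star attr rel by lra.
  apply: rglb => x [w [w0 [cov ->]]].
  have := s_bound cfg IN2 ne feas w0 cov; rewrite -/K; lra.
set E := fun x => exists s, MO_feasible (IN rel) attr (restrict attr c) s /\ x = s setT.
have Ene : exists x, E x.
  exists 0; exists (fun _ => 0); split=> //; split=> //; split; first by move=> *; lra.
  move=> i E0 A B _ _.
  suff : 0 <= dlog (IN rel) A B (restrict attr c i) by lra.
  rewrite /dlog /logIN /Rdiv; apply: Rmult_le_pos; first exact: lnINR_ge0.
  apply: Rlt_le; apply: Rinv_0_lt_compat; rewrite -ln_1; apply: ln_increasing; first lra.
  have : (2 <= INR (IN rel)) by apply: (le_INR 2); apply/leP.
  lra.
have Eb : bound E by exists (rho_star attr rel + K) => x [s [feas ->]]; apply: sb.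
rewrite /MO.
have [_ h] : is_lub E (epsilon (inhabits 0) (fun m => is_lub E m)).
  apply: epsilon_spec; case: (completeness E Eb Ene) => m hm; by exists m.
apply: h => x [s [feas ->]]; exact: sb.
Qed.

Lemma count_configs (V : finType) k n (attr : 'I_k -> {set 'I_n}) (rel : 'I_k -> {set tup V n})
  (Q : pred (config rel)) :
  (forall c, Q c -> is_config attr c) ->
  (#|Q| <= (trunc_log 2 (IN rel)).+1 ^ #|{: 'I_k * {set 'I_n}}|)%N.
Proof.
move=> QP.
set T := trunc_log 2 (IN rel).
have bnd : forall c, Q c -> forall x, (c x <= T)%N.
  move=> c /QP cfg [i A].
  have := cfg; move/forallP/(_ i)/and4P => [_ /eqP c0 /forallP hs /forallP hm].
  have relIN : (#|rel i| <= IN rel)%N.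
    by rewrite /IN (bigD1 i) //= leq_addr.
  have cT : (c (i, set0) <= T)%N by rewrite c0; apply: leq_trunc_log.
  case/orP: (hs A) => [Aat | /eqP ->] //.
  apply: leq_trans cT.
  by have /forallP/(_ set0)/implyP := hm A; apply; rewrite sub0set Aat.
pose f (c : config rel) : {ffun 'I_k * {set 'I_n} -> 'I_T.+1} := [ffun x => inord (c x)].
have inj : {in [set c | Q c] &, injective f}.
  move=> c1 c2; rewrite !inE => q1 q2 e; apply/ffunP => x.
  move/ffunP: e => /(_ x); rewrite /f !ffunE => /(congr1 val).
  by rewrite /= !inordK ?ltnS ?bnd // => h; apply: val_inj.
have -> : #|Q| = #|[set c | Q c]| by apply: eq_card => c; rewrite inE.
rewrite -(card_in_imset inj).
apply: leq_trans (max_card _) _.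
by rewrite card_ffun card_ord.
Qed.

Theorem theorem3p3 :
  forall k n : nat, exists (C : R) (p : nat), (0 < C) /\
    forall (V : finType) (attr : 'I_k -> {set 'I_n}) (rel : 'I_k -> {set tup V n}),
      wf_query attr rel -> (2 <= IN rel)%N ->
      (MO_bound attr rel <= C * (ln (INR (IN rel))) ^ p * AGM attr rel).
Proof.
move=> k n.
set p := #|{: 'I_k * {set 'I_n}}|.
set R2 := Rpower 2 (INR (k * n)).
have ln2 : 0 < ln 2 by rewrite -ln_1; apply: ln_increasing; lra.
exists (R2 * (2 / ln 2) ^ p), p; split.
  apply: Rmult_lt_0_compat; first exact: exp_pos.
  apply: pow_lt; apply: Rdiv_lt_0_compat; lra.
move=> V attr rel wf IN2.
have N2 : 2 <= INR (IN rel) by apply: (le_INR 2); apply/leP.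
have lnN : 0 < ln (INR (IN rel)) by rewrite -ln_1; apply: ln_increasing; lra.
have step : forall c : config rel, is_config attr c && [forall i, restrict attr c i != set0] ->
    Rpower (INR (IN rel)) (MO (IN rel) attr (restrict attr c)) <= AGM attr rel * R2.
  move=> c /andP [cfg /forallP ne].
  have h := MO_le wf IN2 cfg ne.
  rewrite /AGM /R2.
  apply: Rle_trans (Rle_Rpower _ _ _ _ h) _; first lra.
  rewrite Rpower_plus; apply: Rmult_le_compat_l; first by left; apply: exp_pos.
  right; rewrite /Rpower /LL; f_equal; field; lra.
rewrite /MO_bound.
apply: Rle_trans; first by apply: sumR_le => c; apply: step.
rewrite sumR_const.
have hc := @count_configs V k n attr rel
   (fun c : config rel => is_config attr c && [forall i, restrict attr c i != set0])
   (fun c h => proj1 (andP h)).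
set T := trunc_log 2 (IN rel) in hc.
have T1 : (1 <= T)%N by apply: trunc_log_max => //; rewrite expn1.
have T2 : INR T * ln 2 <= ln (INR (IN rel)).
  have h2 := lnINR_le (trunc_logP (isT : (1 < 2)%N) (ltnW IN2)).
  rewrite INR_expn ln_pow /= in h2; last lra.
  by move: h2; rewrite -/T; try (have -> : (1 + 1 = 2) by lra).
have T3 : INR T.+1 <= 2 / ln 2 * ln (INR (IN rel)).
  have t1 : 1 <= INR T by apply: (le_INR 1); apply/leP.
  have t2 : INR T <= ln (INR (IN rel)) / ln 2.
    apply: (Rmult_le_reg_r (ln 2)) => //.
    rewrite /Rdiv Rmult_assoc Rinv_l; lra.
  rewrite S_INR.
  have -> : 2 / ln 2 * ln (INR (IN rel)) = 2 * (ln (INR (IN rel)) / ln 2) by rewrite /Rdiv; ring.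
  lra.
have hQ : INR #|(fun c : config rel => is_config attr c && [forall i, restrict attr c i != set0])|
      <= (2 / ln 2 * ln (INR (IN rel))) ^ p.
  apply: Rle_trans (le_INR _ _ (leP hc)) _.
  rewrite INR_expn; apply: pow_incr; split=> //; exact: pos_INR.
have AGM0 : 0 <= AGM attr rel * R2.
  by apply: Rmult_le_pos; left; apply: exp_pos.
rewrite Rpow_mult_distr in hQ.
have := Rmult_le_compat_r _ _ _ AGM0 hQ.
move=> h; apply: Rle_trans h _; right; rewrite /R2; ring.
Qed.
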